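(* The graph $M_{\rm IV}$ is not word-representable.
   Context: $M_{\rm IV}$ is the split graph with clique $C=\{c_1,\dots,c_6\}$ and independent set $I=\{a_1,a_2,a_3,a_4\}$, where $N(a_1)=\{c_1,c_2\}$, $N(a_2)=\{c_3,c_4\}$, $N(a_3)=\{c_5,c_6\}$, $N(a_4)=\{c_2,c_4,c_6\}$. A graph $G=(V,E)$ is word-representable if there is a word $w$ over $V$ such that for all distinct $a,b\in V$, $ab\in E$ iff $a$ and $b$ alternate in $w$ (i.e. the subsequence of $w$ formed by all occurrences of $a$ and $b$ is $abab\cdots$ or $baba\cdots$). *)

(* Defs.v *)
From mathcomp Require Import all_boot.
Set Implicit Arguments. Unset Strict Implicit. Unset Printing Implicit Defensive.

Definition alt_seq (T : Type) (x y : T) (n : nat) : seq T :=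
  mkseq (fun i => if odd i then y else x) n.

Definition alternate (T : eqType) (w : seq T) (a b : T) : bool :=
  let s := filter (fun x => (x == a) || (x == b)) w in
  (s == alt_seq a b (size s)) || (s == alt_seq b a (size s)).

Definition word_representable (V : finType) (E : rel V) : Prop :=
  exists w : seq V, (forall x : V, x \in w) /\
    (forall a b : V, a != b -> E a b = alternate w a b).

(* The graph M_IV on vertex set 'I_10:
   c_1, ..., c_6 are 0, ..., 5 (the clique C),
   a_1, a_2, a_3, a_4 are 6, 7, 8, 9 (the independent set I). *)
Definition MIV_inC (x : nat) : bool := x < 6.

Definition MIV_nbr (a : nat) : seq nat :=
  match a with
  | 6 => [:: 0; 1]
  | 7 => [:: 2; 3]
  | 8 => [:: 4; 5]
  | 9 => [:: 1; 3; 5]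
  | _ => [::]
  end.

Definition MIV_edge_nat (x y : nat) : bool :=
  (x != y) &&
  [|| MIV_inC x && MIV_inC y,
      MIV_inC x && ~~ MIV_inC y && (x \in MIV_nbr y)
    | ~~ MIV_inC x && MIV_inC y && (y \in MIV_nbr x)].

Definition MIV : rel 'I_10 := fun x y => MIV_edge_nat x y.

(* Main.v *)
Require Import Defs.
From mathcomp Require Import all_boot.
Set Implicit Arguments. Unset Strict Implicit.


Section Gen.
Variable T : eqType.
Definition pr2 (x y : T) := fun z : T => (z == x) || (z == y).
Definition alt2 (w : seq T) x y := sorted (fun p q : T => p != q) (filter (pr2 x y) w).
Definition ll (w : seq T) x y := last y (filter (pr2 x y) w) == x.

Lemma alt_seqS (x y : T) n : alt_seq x y n.+1 = x :: alt_seq y x n.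
Proof.
rewrite /alt_seq /mkseq /=; congr (_ :: _).
have -> : iota 1 n = map (addn 1) (iota 0 n) by rewrite -iotaDl.
by rewrite -map_comp; apply: eq_map => i /=; case: (odd i).
Qed.

Lemma pr2C (x y : T) : pr2 x y =1 pr2 y x.
Proof. by move=> z; rewrite /pr2 orbC. Qed.

Lemma alt_eq (f : seq T) (x y : T) : x != y -> all (pr2 x y) f ->
  (f == alt_seq x y (size f)) = sorted (fun p q : T => p != q) f && (head x f == x).
Proof.
elim: f x y => [|h t IH] x y Hxy /=; first by rewrite eqxx.
case/andP=> Hh Ht.
rewrite alt_seqS eqseq_cons IH; last 2 first.
- by rewrite eq_sym.
- by rewrite (eq_all (pr2C y x)).
case: t Ht {IH} => [|h' t'] /=; first by rewrite eqxx andbT.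
case/andP=> Hh' _.
case: (eqVneq h x) => [->|]; last by rewrite /= !andbF.
rewrite /= andbT; case: (path _ _ _); rewrite ?andbF ?andbT //.
move: Hh'; rewrite /pr2; case/orP=> /eqP->.
  by rewrite eqxx (negbTE Hxy).
by rewrite eqxx Hxy.
Qed.

Lemma alternate_alt2 (w : seq T) x y : x != y -> alternate w x y = alt2 w x y.
Proof.
move=> Hxy; rewrite /alternate /alt2.
have H1 : all (pr2 x y) (filter (pr2 x y) w) by apply: filter_all.
have H2 : all (pr2 y x) (filter (pr2 x y) w) by rewrite (eq_all (pr2C y x)).
rewrite -/(pr2 x y) alt_eq // alt_eq 1?eq_sym //.
move: H1; case: (filter _ _) => [|h t] //=; first by rewrite !eqxx.
by case/andP; rewrite /pr2; case/orP=> /eqP-> _ /=; rewrite eqxx ?andbT;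
  case: (path _ _ _); rewrite /= ?orbT ?andbF.
Qed.

Lemma ll_rcons w c x y : x != y ->
  ll (rcons w c) x y = if c == x then true else if c == y then false else ll w x y.
Proof.
move=> Hxy; rewrite /ll filter_rcons /pr2 /=.
case: (eqVneq c x) => [->|Hcx]; first by rewrite /= last_rcons eqxx.
case: (eqVneq c y) => [->|Hcy]; first by rewrite /= last_rcons eq_sym (negbTE Hxy).
by rewrite /=.
Qed.

Lemma alt2_rcons w c x y : x != y ->
  alt2 (rcons w c) x y = alt2 w x y && ~~ ((c == x) && ll w x y || (c == y) && ll w y x).
Proof.
move=> Hxy; rewrite /alt2 /ll (eq_filter (pr2C y x)) filter_rcons /pr2 /=.
case: (eqVneq c x) => [->|Hcx].
  rewrite (negbTE Hxy) /= orbF.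
  case: (filter _ _) => [|h t] /=; first by rewrite eq_sym Hxy.
  by rewrite rcons_path.
case: (eqVneq c y) => [->|Hcy].
  rewrite /=.
  case: (filter _ _) => [|h t] /=; first by rewrite Hxy.
  by rewrite rcons_path.
by rewrite /= andbT.
Qed.

Lemma ll_trans w x y z : x != y -> y != z -> x != z ->
  ll w x y -> ll w y z -> ll w x z.
Proof.
move=> Hxy Hyz Hxz; elim/last_ind: w => [|w c IH].
  by rewrite /ll /= eq_sym (negbTE Hxy).
rewrite !ll_rcons //.
case: (eqVneq c x) => // Hcx.
case: (eqVneq c y) => // Hcy.
by case: (eqVneq c z).
Qed.

Lemma ll_total w x y : x != y -> x \in w -> ll w x y || ll w y x.
Proof.
move=> Hxy; have Hyx : y != x by rewrite eq_sym.
elim/last_ind: w => [|w c IH] //.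
rewrite mem_rcons inE !ll_rcons //.
case: (eqVneq c x) => [->|Hcx] //=; move=> /IH; by case: (c == y).
Qed.

Lemma ll_anti w x y : x != y -> ~~ (ll w x y && ll w y x).
Proof.
move=> Hxy; have Hyx : y != x by rewrite eq_sym.
elim/last_ind: w => [|w c IH].
  by rewrite /ll /= eq_sym (negbTE Hxy).
rewrite !ll_rcons //.
case: (eqVneq c x) => [->|Hcx]; first by rewrite (negbTE Hxy).
by case: (c == y).
Qed.

End Gen.

Definition stT := (seq bool * seq (seq bool) * seq (seq bool))%type.
Definition I5 := iota 0 5.
Arguments I5 : simpl never.
Definition absS (v : seq nat) : stT :=
  ([seq i \in v | i <- I5],
   [seq [seq (i != j) && ll v i j | j <- I5] | i <- I5],
   [seq [seq (i != j) && ~~ alt2 v i j | j <- I5] | i <- I5]).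
Definition gt (M : seq (seq bool)) i j := nth false (nth [::] M i) j.
Definition absstep (st : stT) (c : nat) : stT :=
  let: (Sn, L, F) := st in
  ([seq nth false Sn i || (c == i) | i <- I5],
   [seq [seq (i != j) && (if c == i then true else if c == j then false else gt L i j)
        | j <- I5] | i <- I5],
   [seq [seq (i != j) && (gt F i j || (c == i) && gt L i j || (c == j) && gt L j i)
        | j <- I5] | i <- I5]).

Lemma nth_I5 (A : Type) (f : nat -> A) d i : i < 5 -> nth d [seq f k | k <- I5] i = f i.
Proof. by move=> Hi; rewrite (nth_map 0) ?size_iota // nth_iota. Qed.

Lemma gt_mk (f : nat -> nat -> bool) i j : i < 5 -> j < 5 ->
  gt [seq [seq f i j | j <- I5] | i <- I5] i j = f i j.
Proof. by move=> Hi Hj; rewrite /gt nth_I5 // nth_I5. Qed.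

Lemma inI5 i : i \in I5 -> i < 5.
Proof. by rewrite mem_iota. Qed.

Lemma absS_rcons v c : absS (rcons v c) = absstep (absS v) c.
Proof.
rewrite /absS; cbn [absstep]; congr (_, _, _).
- apply/eq_in_map => i /inI5 Hi; rewrite nth_I5 // mem_rcons inE.
  by rewrite eq_sym orbC.
- apply/eq_in_map => i /inI5 Hi; apply/eq_in_map => j /inI5 Hj.
  rewrite gt_mk //; case: (eqVneq i j) => [->|Hij] //=.
  by rewrite ll_rcons.
- apply/eq_in_map => i /inI5 Hi; apply/eq_in_map => j /inI5 Hj.
  rewrite !gt_mk //; case: (eqVneq i j) => [->|Hij] //=.
  by rewrite alt2_rcons // negb_and negbK orbA.
Qed.

Definition edges : seq (nat * nat) :=
  [:: (1,2);(1,3);(1,4);(2,3);(2,4);(3,4);(0,1);(0,3)].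
Definition good (st : stT) := all (fun e => ~~ gt st.2 e.1 e.2) edges.
Definition cyc4 (A : Type) (B : A -> A -> bool) x y z t :=
  [|| B x y && B y z && B z t, B y z && B z t && B t x,
      B z t && B t x && B x y | B t x && B x y && B y z].
Definition acc (st : stT) :=
  [&& all id st.1.1, gt st.2 0 2, gt st.2 0 4 & cyc4 (fun p q => gt st.1.2 q p) 1 2 3 4].

Definition init : stT := absS [::].

Fixpoint reach (k : nat) (R fr : seq stT) : seq stT :=
  match k with
  | 0 => R
  | k.+1 =>
    let nw := undup [seq s' <- [seq absstep s c | s <- fr, c <- iota 0 6] |
                     good s' && (s' \notin R)] in
    reach k (R ++ nw) nw
  end.

Definition Rf := Eval vm_compute in reach 40 [:: init] [:: init].

Definition closedR := all (fun s => all (fun c => ~~ good (absstep s c) || (absstep s c \in Rf)) (iota 0 6)) Rf.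

Lemma closedR_ok : closedR. Proof. vm_compute. reflexivity. Qed.
Lemma noacc : all (fun s => ~~ acc s) Rf. Proof. vm_compute. reflexivity. Qed.
Lemma init_in : init \in Rf. Proof. vm_compute. reflexivity. Qed.

Lemma alt2_mono (T : eqType) (v : seq T) c x y : x != y -> alt2 (rcons v c) x y -> alt2 v x y.
Proof. by move=> Hxy; rewrite alt2_rcons // => /andP[]. Qed.

Lemma goodE v : good (absS v) = all (fun e => alt2 v e.1 e.2) edges.
Proof. by rewrite /good /edges /= !(gt_mk (fun i j => (i != j) && ~~ alt2 v i j)) //= !negbK. Qed.

Lemma inR v : all (fun c => c < 6) v -> good (absS v) -> absS v \in Rf.
Proof.
elim/last_ind: v => [|v c IH] /=; first by move=> _ _; exact: init_in.
rewrite all_rcons => /andP[Hc Hv] Hg.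
have Hg' : good (absS v).
  rewrite goodE; apply/allP => e He.
  have Hne : all (fun e : nat * nat => e.1 != e.2) edges by [].
  move: Hg; rewrite goodE => /allP /(_ e He); apply: alt2_mono.
  by move/allP: Hne => /(_ e He).
move/allP: closedR_ok => /(_ _ (IH Hv Hg')) /allP.
have Hc' : c \in iota 0 6 by rewrite mem_iota.
move=> /(_ c Hc'); rewrite -absS_rcons Hg /=.
done.
Qed.

Lemma code_main v : all (fun c => c < 6) v -> (forall i, i < 5 -> i \in v) ->
  all (fun e => alt2 v e.1 e.2) edges -> ~~ alt2 v 0 2 -> ~~ alt2 v 0 4 ->
  cyc4 (fun p q => ll v q p) 1 2 3 4 -> False.
Proof.
move=> Hv Hin He H2 H4 Hcyc.
have HR := inR Hv (etrans (goodE v) He).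
move/allP: noacc => /(_ _ HR); apply/negP/negPn.
rewrite /acc.
apply/and4P; split.
- apply/allP => b /mapP [i /inI5 Hi ->]; exact: Hin.
- by rewrite (gt_mk (fun i j => (i != j) && ~~ alt2 v i j)).
- by rewrite (gt_mk (fun i j => (i != j) && ~~ alt2 v i j)).
- by rewrite /cyc4 !(gt_mk (fun i j => (i != j) && ll v i j)).
Qed.

Definition P6 : seq (nat * nat) := Eval vm_compute in
  [seq (i, j) | i <- iota 0 6, j <- [seq j <- iota 0 6 | i < j]].
Definition Rb (b : seq bool) i j :=
  if i < j then nth false b (index (i, j) P6) else ~~ nth false b (index (j, i) P6).
Fixpoint lall (A : Type) (p : A -> bool) (s : seq A) : bool :=
  if s is x :: s' then (if p x then lall p s' else false) else true.
Fixpoint lhas (A : Type) (p : A -> bool) (s : seq A) : bool :=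
  if s is x :: s' then (if p x then true else lhas p s') else false.
Lemma lallE (A : Type) (p : A -> bool) s : lall p s = all p s.
Proof. by elim: s => //= x s <-; case: (p x). Qed.
Lemma lhasE (A : Type) (p : A -> bool) s : lhas p s = has p s.
Proof. by elim: s => //= x s <-; case: (p x). Qed.
Definition trans6 b :=
  lall (fun i => lall (fun j => lall (fun k =>
    if (i != j) then if (j != k) then if (i != k) then if Rb b i j then if Rb b j k then Rb b i k
    else true else true else true else true else true)
  (iota 0 6)) (iota 0 6)) (iota 0 6).
Definition patn a x y z t :=
  [&& uniq [:: x; y; z; t], MIV_edge_nat a x, ~~ MIV_edge_nat a y,
      MIV_edge_nat a z & ~~ MIV_edge_nat a t].
Fixpoint tups n : seq (seq nat) :=
  if n is n'.+1 then [seq x :: r | x <- iota 0 6, r <- tups n'] else [:: [::]].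
Definition TL : seq (seq nat) := Eval vm_compute in
  [seq tp <- [seq a :: r | a <- [:: 6; 7; 8; 9], r <- tups 4] |
     if tp is [:: a; x; y; z; t] then patn a x y z t else false].
Definition cycT b (tp : seq nat) :=
  if tp is [:: a; x; y; z; t] then cyc4 (fun p q => Rb b q p) x y z t else false.
Fixpoint allbools n : seq (seq bool) :=
  if n is n'.+1 then [seq c :: r | c <- [:: true; false], r <- allbools n'] else [:: [::]].
Lemma bigcheck : lall (fun b => if trans6 b then lhas (cycT b) TL else true) (allbools 15).
Proof. vm_compute. reflexivity. Qed.
Definition tpok (tp : seq nat) :=
  if tp is [:: a; x; y; z; t] then
    [&& uniq tp, a < 10, x < 6, y < 6, z < 6, t < 6,
        MIV_edge_nat a x, ~~ MIV_edge_nat a y, MIV_edge_nat a z,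
        ~~ MIV_edge_nat a t, MIV_edge_nat x y, MIV_edge_nat x z,
        MIV_edge_nat x t, MIV_edge_nat y z, MIV_edge_nat y t &
        MIV_edge_nat z t]
  else false.
Lemma TLok : all tpok TL.
Proof. vm_compute. reflexivity. Qed.

Section Tr.
Variable T : eqType.
Lemma idx_eq (s : seq T) c e : c \in s -> (index e s == index c s) = (e == c).
Proof.
move=> Hc; case: (eqVneq e c) => [->|Hne]; first by rewrite eqxx.
apply/negP => /eqP H.
have He : e \in s by rewrite -index_mem H index_mem.
move/eqP: Hne; apply.
by rewrite -(nth_index e He) H (set_nth_default c) ?index_mem // nth_index.
Qed.

Lemma filter_idx (s w : seq T) c d : c \in s -> d \in s ->
  filter (pr2 (index c s) (index d s)) (map (index^~ s) w) = map (index^~ s) (filter (pr2 c d) w).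
Proof.
move=> Hc Hd; rewrite filter_map; congr map; apply: eq_filter => e.
by rewrite /= /pr2 !idx_eq.
Qed.

Lemma sorted_map_in (U : eqType) (f : T -> U) (P : pred T) (F : seq T) :
  {in P &, injective f} -> all P F ->
  sorted (fun p q : U => p != q) (map f F) = sorted (fun p q : T => p != q) F.
Proof.
move=> Hinj; case: F => // h t /= /andP [Ph Pt].
elim: t h Ph Pt => //= h' t IH h Ph /andP [Ph' Pt].
by rewrite IH // (inj_in_eq Hinj).
Qed.

Lemma alt2_idx (s w : seq T) c d : c \in s -> d \in s ->
  alt2 (map (index^~ s) w) (index c s) (index d s) = alt2 w c d.
Proof.
move=> Hc Hd; rewrite /alt2 filter_idx //; apply: (@sorted_map_in _ _ (mem s)).
  by move=> p q Hp Hq H; apply/eqP; rewrite -(idx_eq _ Hq) H.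
apply/allP => e; rewrite mem_filter /pr2 => /andP [/orP [/eqP->|/eqP->] _] //.
Qed.

Lemma ll_idx (s w : seq T) c d : c \in s -> d \in s ->
  ll (map (index^~ s) w) (index c s) (index d s) = ll w c d.
Proof. by move=> Hc Hd; rewrite /ll filter_idx // -[index d s]/((index^~ s) d) last_map idx_eq. Qed.
End Tr.

Lemma MIVi p q : p < 10 -> q < 10 -> MIV (inord p) (inord q) = MIV_edge_nat p q.
Proof. by move=> Hp Hq; rewrite /MIV !inordK. Qed.

Lemma local (w : seq 'I_10) (Hall : forall x, x \in w)
  (Hrep : forall a b, a != b -> MIV a b = alternate w a b) (a x y z t : 'I_10) :
  uniq [:: a; x; y; z; t] -> MIV a x -> ~~ MIV a y -> MIV a z -> ~~ MIV a t ->
  MIV x y -> MIV x z -> MIV x t -> MIV y z -> MIV y t -> MIV z t ->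
  cyc4 (fun p q => ll w q p) x y z t -> False.
Proof.
move=> Hs Hax Hay Haz Hat Hxy Hxz Hxt Hyz Hyt Hzt Hcyc.
set s := [:: a; x; y; z; t].
set v := map (index^~ s) w.
have Ei : forall i, i < 5 -> index (nth a s i) s = i by move=> i Hi; apply: index_uniq.
have Hm : forall i, i < 5 -> nth a s i \in s by move=> i Hi; apply: mem_nth.
have altv : forall i j, i < 5 -> j < 5 -> i != j -> alt2 v i j = MIV (nth a s i) (nth a s j).
  move=> i j Hi Hj Hij; rewrite -{1}(Ei i Hi) -{1}(Ei j Hj) alt2_idx ?Hm //.
  have Hne : nth a s i != nth a s j by rewrite nth_uniq.
  by rewrite Hrep // alternate_alt2.
have llv : forall i j, i < 5 -> j < 5 -> ll v i j = ll w (nth a s i) (nth a s j).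
  by move=> i j Hi Hj; rewrite -{1}(Ei i Hi) -{1}(Ei j Hj) ll_idx ?Hm.
apply: (code_main (v := v)).
- apply/allP => c /mapP [e _ ->]; exact: (leq_ltn_trans (index_size e s)).
- move=> i Hi; apply/mapP; exists (nth a s i); [exact: Hall | by rewrite Ei].
- by rewrite /edges; cbn [all fst snd]; rewrite !altv //= Hxy Hxz Hxt Hyz Hyt Hzt Hax Haz.
- by rewrite altv.
- by rewrite altv.
- by move: Hcyc; rewrite /cyc4; cbv beta; rewrite !llv.
Qed.

Lemma mem_allbools b : b \in allbools (size b).
Proof.
elim: b => [|c b IH] //=.
by case: c; rewrite /= !mem_cat map_f ?orbT.
Qed.

Lemma inI6 i : i \in iota 0 6 -> i < 6.
Proof. by rewrite mem_iota. Qed.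

Theorem lemma12 : ~ word_representable MIV.
Proof.
case=> w [Hall Hrep].
pose Rl i j := ll w (inord i : 'I_10) (inord j).
pose b := [seq Rl p.1 p.2 | p <- P6].
have inP : forall i j, i < 6 -> j < 6 -> i < j -> (i, j) \in P6.
  by move=> i j; do 6?[case: i => [|i] //]; do 6?[case: j => [|j] //].
have Hdist : forall i j, i < 10 -> j < 10 -> i != j -> (inord i : 'I_10) != inord j.
  move=> i j Hi Hj; apply: contra => /eqP /(congr1 val) /=.
  by rewrite !inordK // => ->.
have RbE : forall i j, i < 6 -> j < 6 -> i != j -> Rb b i j = Rl i j.
  move=> i j Hi Hj Hij; rewrite /Rb; case: ltnP => Hlt.
    by rewrite (nth_map (0,0)) ?index_mem ?inP // nth_index ?inP.
  have Hji : j < i by rewrite ltn_neqAle eq_sym Hij.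
  rewrite (nth_map (0,0)) ?index_mem ?inP // nth_index ?inP //=.
  have Hd : (inord j : 'I_10) != inord i.
    by apply: Hdist; rewrite 1?eq_sym // (ltn_trans _ (isT : 6 < 10)).
  have := ll_total Hd (Hall _); have := @ll_anti _ w _ _ Hd.
  by rewrite /Rl; case: (ll w _ _); case: (ll w _ _).
have Htr : trans6 b.
  rewrite /trans6 lallE; apply/allP => i /inI6 Hi; rewrite lallE.
  apply/allP => j /inI6 Hj; rewrite lallE; apply/allP => k /inI6 Hk.
  case: (eqVneq i j) => [//|Hij]; case: (eqVneq j k) => [//|Hjk].
  case: (eqVneq i k) => [//|Hik].
  rewrite !RbE //.
  case E1: (Rl i j) => //; case E2: (Rl j k) => //.
  apply: (ll_trans _ _ _ E1 E2); apply: Hdist => //;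
    apply: (ltn_trans _ (isT : 6 < 10)) => //.
have := bigcheck; rewrite lallE => /allP /(_ b).
have Hb : b \in allbools 15 by have := mem_allbools b; rewrite size_map.
move=> /(_ Hb); rewrite Htr lhasE => /hasP [tp HtpTL Hcyc].
move/allP: TLok => /(_ tp HtpTL).
case: tp HtpTL Hcyc => [|a [|x [|y [|z [|t [|? ?]]]]]] //= _ Hcyc.
move=> /andP [Hu /andP [Ha /andP [Hx /andP [Hy /andP [Hz /andP [Ht
  /andP [E1 /andP [E2 /andP [E3 /andP [E4 /andP [E5 /andP [E6 /andP [E7
  /andP [E8 /andP [E9 E10]]]]]]]]]]]]]]].
have Hu' : uniq [:: a; x; y; z; t] by exact: Hu.
have L6 : 6 < 10 by [].
have x10 := ltn_trans Hx L6; have y10 := ltn_trans Hy L6.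
have z10 := ltn_trans Hz L6; have t10 := ltn_trans Ht L6.
apply: (local Hall Hrep (a := inord a) (x := inord x) (y := inord y)
          (z := inord z) (t := inord t)); rewrite ?MIVi //.
- have H10 : all (fun p => p < 10) [:: a; x; y; z; t] by rewrite /= Ha x10 y10 z10 t10.
  rewrite -[[:: inord a; _; _; _; _]]/(map inord [:: a; x; y; z; t]).
  rewrite map_inj_in_uniq // => p q Hp Hq /(congr1 val) /=.
  by rewrite !inordK // ?(allP H10 p Hp) ?(allP H10 q Hq).
- move: Hcyc; rewrite /cyc4; cbv beta; rewrite !RbE //;
    apply/negP => /eqP Hpq; move: Hu'; rewrite Hpq /= !inE !eqxx /= ?orbT ?andbF //.
Qed.
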